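(* Let $G=(V,E,w)$ be a connected weighted multigraph, let $S\subseteq V$, $x\in S$ and $l\ge0$. Let $V'=V\setminus C_S(l,x)$, $S'=S\setminus C_S(l,x)$ and $\psi=\max_{v\in V}d_G(v,S)$. Then \[ \max_{v\in V'} d_{G(V')}(v,S')\le \psi. \]
   Context: Edge lengths are $d(e)=1/w(e)$; $d_H(u,S)$ is the shortest-path distance in graph $H$ from $u$ to the nearest vertex of $S$, and $G(U)$ is the subgraph induced by $U$. $F(S)=\{(u\to v): (u,v)\in E,\ d_G(u,S)+d(u,v)=d_G(v,S)\}$ is the set of (directed) forward edges induced by $S$. The cone $C_S(l,x)$ is the set of vertices reachable from $x$ by a path in $G$ such that the sum of the lengths of traversed edges that are not traversed as forward edges of $F(S)$ is at most $l$. *)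

(* Defs.v *)
From HB Require Import structures.
From mathcomp Require Import all_boot all_order all_algebra.
From mathcomp Require Import all_classical all_reals ereal.
Set Implicit Arguments. Unset Strict Implicit. Unset Printing Implicit Defensive.
Import Order.TTheory GRing.Theory Num.Theory.
Local Open Scope classical_set_scope.
Local Open Scope ring_scope.

(* A weighted multigraph: finite vertex type V, finite edge type E
   (parallel edges allowed), each edge e joins src e and dst e
   (undirected; the orientation is only a naming convention), weight w e > 0.
   Edge length d(e) = 1 / w(e). *)
Section Graph.
Variables (R : realType) (V E : finType) (src dst : E -> V) (w : E -> R).

Definition elen (e : E) : R := 1 / w e.

(* A traversal step (e, b): b = true traverses e from src to dst,
   b = false from dst to src. *)
Definition stail (s : E * bool) : V := if s.2 then src s.1 else dst s.1.
Definition shead (s : E * bool) : V := if s.2 then dst s.1 else src s.1.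

(* walk_in U u p : p is a walk starting at u all of whose vertices lie in U,
   i.e. a walk in the induced subgraph G(U). *)
Fixpoint walk_in (U : set V) (u : V) (p : seq (E * bool)) : Prop :=
  match p with
  | [::] => U u
  | s :: p' => U u /\ stail s = u /\ walk_in U (shead s) p'
  end.

Fixpoint walk_end (u : V) (p : seq (E * bool)) : V :=
  match p with
  | [::] => u
  | s :: p' => walk_end (shead s) p'
  end.

Definition walk_len (p : seq (E * bool)) : R := \sum_(s <- p) elen s.1.

(* d_{G(U)}(u, S): shortest-path distance in G(U) from u to the nearest
   vertex of S (+oo if none is reachable). *)
Definition dist (U S : set V) (u : V) : \bar R :=
  ereal_inf [set (walk_len p)%:E | p in
             [set p | walk_in U u p /\ S (walk_end u p)]].

Definition distG (S : set V) (u : V) : \bar R := dist setT S u.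

Definition graph_connected : Prop :=
  forall u v : V, exists p, walk_in setT u p /\ walk_end u p = v.

(* The step s traverses the edge as a forward edge of F(S):
   d_G(u,S) + d(u,v) = d_G(v,S) where u -> v is the traversal direction. *)
Definition forward_step (S : set V) (s : E * bool) : Prop :=
  (distG S (stail s) + (elen s.1)%:E)%E = distG S (shead s).

Definition cone_cost (S : set V) (p : seq (E * bool)) : R :=
  \sum_(s <- p) (if `[< forward_step S s >] then 0 else elen s.1).

Definition cone (S : set V) (l : R) (x : V) : set V :=
  [set v | exists p, walk_in setT x p /\ walk_end x p = v /\ cone_cost S p <= l].

End Graph.

(* Main.v *)
Require Import Defs.
From HB Require Import structures.
From mathcomp Require Import all_boot all_order all_algebra.
From mathcomp Require Import all_classical all_reals ereal.
Import Order.TTheory GRing.Theory Num.Theory.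
Local Open Scope classical_set_scope.
Local Open Scope ring_scope.
Local Open Scope ereal_scope.

Lemma walk_len_cons (R : realType) (E : finType) (w : E -> R) s p :
  walk_len w (s :: p) = (elen w s.1 + walk_len w p)%R.
Proof. by rewrite /walk_len big_cons. Qed.

Lemma walk_len_ge0 (R : realType) (E : finType) (w : E -> R)
  (hw : forall e, (0 < w e)%R) p : (0 <= walk_len w p)%R.
Proof.
rewrite /walk_len; elim: p => [|s p IH]; first by rewrite big_nil.
rewrite big_cons addr_ge0 // /elen divr_ge0 // ltW //.
Qed.

Lemma elen_gt0 (R : realType) (E : finType) (w : E -> R)
  (hw : forall e, (0 < w e)%R) e : (0 < elen w e)%R.
Proof. by rewrite /elen divr_gt0. Qed.

Lemma dist_ge0 (R : realType) (V E : finType) (src dst : E -> V) (w : E -> R)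
  (hw : forall e, (0 < w e)%R) U S u : 0 <= dist src dst w U S u.
Proof.
apply: le_ereal_inf_tmp => _ [p _ <-]; rewrite lee_fin; exact: walk_len_ge0.
Qed.

Lemma dist_step (R : realType) (V E : finType) (src dst : E -> V) (w : E -> R)
  U S u s : U u -> stail src dst s = u ->
  dist src dst w U S u <= (elen w s.1)%:E + dist src dst w U S (shead src dst s).
Proof.
move=> Uu hs; rewrite -leeBlDl //.
apply: le_ereal_inf_tmp => _ [q [hq1 hq2] <-].
rewrite leeBlDl // -EFinD -walk_len_cons.
apply: ereal_inf_lbound; exists (s :: q) => //.
Qed.

Lemma dist_bellman (R : realType) (V E : finType) (src dst : E -> V) (w : E -> R)
  S u : ~ S u -> distG src dst w S u < +oo ->
  exists s, stail src dst s = u /\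
    distG src dst w S u = (elen w s.1)%:E + distG src dst w S (shead src dst s).
Proof.
move=> nSu fin.
pose P := [pred s : E * bool | stail src dst s == u].
pose F := fun s : E * bool => (elen w s.1)%:E + distG src dst w S (shead src dst s).
have [s0 Ps0 | noP] := pickP P; last first.
  exfalso; move: fin; rewrite /distG /dist.
  suff -> : [set (walk_len w p)%:E | p in
      [set p | walk_in src dst setT u p /\ S (walk_end src dst u p)]] = set0.
    by rewrite ereal_inf0.
  apply/seteqP; split => // _ [[|s p] [h1 h2] _] //=.
  by case: h1 => _ [hs _]; move: (noP s); rewrite /P /= hs eqxx.
case: (arg_minP F Ps0) => m /eqP Pm Hmin.
exists m; split => //; apply/eqP; rewrite eq_le; apply/andP; split.
  by apply: dist_step.
apply: le_ereal_inf_tmp => _ [[|s p] [h1 h2] <-].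
  by exfalso; apply: nSu.
case: h1 => _ [hs h1].
apply: (le_trans (Hmin s _)); first by rewrite /P /= hs.
rewrite walk_len_cons EFinD leeD2l //.
apply: ereal_inf_lbound; exists p => //.
Qed.

Lemma walk_in_rcons (V E : finType) (src dst : E -> V) x p s :
  walk_in src dst setT x p -> stail src dst s = walk_end src dst x p ->
  walk_in src dst setT x (rcons p s).
Proof.
elim: p x => [|t p IH] x /=; first by move=> _ ->.
by move=> [_ [h1 h2]] h3; split => //; split => //; apply: IH.
Qed.

Lemma walk_end_rcons (V E : finType) (src dst : E -> V) x p s :
  walk_end src dst x (rcons p s) = shead src dst s.
Proof. by elim: p x => [|t p IH] x //=. Qed.

Theorem mainTheorem8 (R : realType) (V E : finType) (src dst : E -> V)
  (w : E -> R) (hw : forall e, (0 < w e)%R)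
  (hconn : graph_connected src dst)
  (S : set V) (x : V) (hx : S x) (l : R) (hl : (0 <= l)%R) :
  let C := cone src dst w S l x in
  let V' := ~` C in
  let S' := S `\` C in
  let psi := \big[Order.max/-oo%E]_(v : V) distG src dst w S v in
  forall v, V' v -> (dist src dst w V' S' v <= psi)%E.
Proof.
move=> C V' S' psi v V'v.
pose D := distG src dst w S.
have key : forall n u, (#|[pred y | (D y < D u)%E]| < n)%N -> V' u ->
    dist src dst w V' S' u <= D u.
  elim=> [//|n IH] u hn V'u.
  have [Doo|fin] := eqVneq (D u) +oo; first by rewrite Doo leey.
  have {}fin : D u < +oo by rewrite ltey.
  have [Su|nSu] := pselect (S u).
    apply: (@le_trans _ _ 0); last exact: dist_ge0.
    apply: ereal_inf_lbound; exists [::] => //=.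
    by rewrite /walk_len big_nil.
  have [s [hs hD]] := @dist_bellman _ _ _ src dst w S u nSu fin.
  set h := shead src dst s in hD.
  have hfin : D h \is a fin_num.
    rewrite fin_numE; apply/andP; split.
      by rewrite gt_eqF // (@lt_le_trans _ _ 0) ?ltNy0 //; exact: dist_ge0.
    rewrite lt_eqF //; rewrite (le_lt_trans _ fin) //.
    have -> : D u = _ := hD.
    by rewrite leeDr // lee_fin ltW // elen_gt0.
  have hlt : D h < D u.
    have -> : D u = _ := hD.
    by rewrite lteDr // lte_fin elen_gt0.
  have V'h : V' h.
    move=> [p [hp1 [hp2 hp3]]]; apply: (V'u).
    pose rs := (s.1, ~~ s.2).
    have ht : stail src dst rs = h by rewrite /h /rs /stail /shead /=; case: (s.2).
    have hh : shead src dst rs = u by rewrite -hs /rs /stail /shead /=; case: (s.2).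
    exists (rcons p rs); split; first by apply: walk_in_rcons => //; rewrite ht hp2.
    split; first by rewrite walk_end_rcons.
    rewrite /cone_cost -cats1 big_cat big_cons big_nil /=.
    have -> : `[< forward_step src dst w S rs >] = true.
      apply: asboolT; rewrite /forward_step ht hh hD addeC //.
    by rewrite !addr0.
  
  apply: (le_trans (@dist_step _ _ _ src dst w V' S' u s V'u hs)).
  have -> : D u = _ := hD.
  apply: leeD2l; apply: IH => //.
  rewrite -ltnS (leq_trans _ hn) // ltnS proper_card //.
  apply/properP; split.
    apply/fintype.subsetP => y; rewrite !unfold_in /= => /lt_trans; apply; exact: hlt.
  by exists h; rewrite !unfold_in /= ?hlt // ltxx.
apply: (le_trans (key _ _ (ltnSn _) V'v)).
rewrite /psi (bigD1 v) //.
by rewrite le_max lexx.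
Qed.
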